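(* Let $n\ge3$, $\emptyset\ne S\subseteq\{1,\dots,n-1\}$, $\mathfrak p\mathfrak p_n:=\sum_{i\in S}\mathfrak p_i\mathfrak p_n$. Then $$(1+\mathfrak p\mathfrak p_n)^*\cap(1+\mathfrak a_{n,s})^*=\begin{cases}\big(1+\sum_{|I|=s,\ I\in\mathcal J(\mathfrak p)}\mathfrak p_I\big)^*,& s=2,\dots,n-1,\\ (1+F_n)^*,& s=n.\end{cases}$$ In particular $(1+\mathfrak p\mathfrak p_n)^*\cap(1+\mathfrak a_{n,1})^*=(1+\mathfrak p\mathfrak p_n)^*\cap(1+\mathfrak a_{n,2})^*=(1+\mathfrak p\mathfrak p_n)^*$.
   Context: $K$ is a field. $\mathbb S_n$: $K$-algebra generated by $x_1,\dots,x_n,y_1,\dots,y_n$ with relations $y_ix_i=1$, $[x_i,y_j]=[x_i,x_j]=[y_i,y_j]=0$ ($i\ne j$). $e_i:=1-x_iy_i$; $\mathfrak p_i$ = ideal of $\mathbb S_n$ generated by $e_i$; $\mathfrak p_I:=\prod_{i\in I}\mathfrak p_i$; $\mathfrak a_{n,s}:=\sum_{|I|=s}\mathfrak p_I$; $F_n:=\mathfrak p_{\{1,\dots,n\}}$. $(1+\mathfrak b)^*$ = group of units of $\mathbb S_n$ lying in $1+\mathfrak b$. $\mathcal J(\mathfrak p):=\{J\subseteq\{1,\dots,n\}: n\in J,\ J\cap S\ne\emptyset\}$. *)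

(* Defs.v *)
From HB Require Import structures.
From mathcomp Require Import all_boot all_order all_algebra.
Set Implicit Arguments. Unset Strict Implicit. Unset Printing Implicit Defensive.
Import GRing.Theory.
Local Open Scope ring_scope.

(* Conventions: generators are indexed 0-based, x i, y i for i < n
   (paper's index k corresponds to k-1 here; paper's index n is n.-1). *)

Section Jacobson.
Variables (K : fieldType) (n : nat) (A : algType K).

Definition alg_hom (B : algType K) (f : A -> B) : Prop :=
  (forall a b, f (a + b) = f a + f b) /\ (forall a b, f (a * b) = f a * f b) /\
  f 1 = 1 /\ (forall (k : K) a, f (k *: a) = k *: f a).

End Jacobson.

Definition Sn_rels (K : fieldType) (n : nat) (B : algType K) (x y : nat -> B) : Prop :=
  (forall i, (i < n)%N -> y i * x i = 1) /\
  (forall i j, (i < n)%N -> (j < n)%N -> i != j ->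
     x i * y j = y j * x i /\ x i * x j = x j * x i /\ y i * y j = y j * y i).

(* (A, x, y) is the K-algebra presented by generators x_i, y_i and the
   relations of S_n, i.e. it satisfies the universal property. *)
Definition is_Sn (K : fieldType) (n : nat) (A : algType K) (x y : nat -> A) : Prop :=
  Sn_rels n x y /\
  forall (B : algType K) (a b : nat -> B), Sn_rels n a b ->
    (exists f : A -> B, alg_hom f /\
        forall i, (i < n)%N -> f (x i) = a i /\ f (y i) = b i) /\
    (forall f g : A -> B, alg_hom f -> alg_hom g ->
        (forall i, (i < n)%N -> f (x i) = g (x i) /\ f (y i) = g (y i)) ->
        forall z, f z = g z).

Definition ideal_gen (R : nzRingType) (P : R -> Prop) : R -> Prop :=
  fun z => exists l : seq (R * R * R),
    (forall t, t \in l -> P t.1.2) /\ z = \sum_(t <- l) t.1.1 * t.1.2 * t.2.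

Definition ideal_mul (R : nzRingType) (P Q : R -> Prop) : R -> Prop :=
  ideal_gen (fun z => exists a b, P a /\ Q b /\ z = a * b).

Definition is_unit (R : nzRingType) (u : R) : Prop :=
  exists v, u * v = 1 /\ v * u = 1.

Definition units1 (R : nzRingType) (b : R -> Prop) : R -> Prop :=
  fun u => is_unit u /\ b (u - 1).

Definition ideal_cap (R : nzRingType) (P Q : R -> Prop) : R -> Prop :=
  fun z => P z /\ Q z.

Section Ideals.
Variables (K : fieldType) (n : nat) (A : algType K) (x y : nat -> A).

Definition e_ (i : nat) : A := 1 - x i * y i.

Definition p_ (i : nat) : A -> Prop := ideal_gen (fun z => z = e_ i).

(* p_I = prod_{i in I} p_i (taken in increasing order of indices; the whole
   ring for I empty) *)
Definition pI (I : {set 'I_n}) : A -> Prop :=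
  foldr (fun i acc => ideal_mul (p_ i) acc) (ideal_gen (fun z => z = 1))
        (map val (enum I)).

Definition a_ns (s : nat) : A -> Prop :=
  ideal_gen (fun z => exists I : {set 'I_n}, #|I| = s /\ pI I z).

Definition F_n : A -> Prop := pI [set: 'I_n].

Definition ppn (S : {set 'I_n}) : A -> Prop :=
  ideal_gen (fun z => exists i : 'I_n, i \in S /\ ideal_mul (p_ i) (p_ n.-1) z).

End Ideals.

Definition Jp (n : nat) (S J : {set 'I_n}) : Prop :=
  (exists j : 'I_n, j \in J /\ val j = n.-1) /\ (exists j : 'I_n, j \in J /\ j \in S).

Definition a_ns_J (K : fieldType) (n : nat) (A : algType K) (x y : nat -> A)
    (S : {set 'I_n}) (s : nat) : A -> Prop :=
  ideal_gen (fun z => exists I : {set 'I_n}, #|I| = s /\ Jp S I /\ pI x y I z).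

(* Main.v *)
Require Import Defs.
From HB Require Import structures.
From mathcomp Require Import all_boot all_order all_algebra.
From Stdlib Require Import ClassicalEpsilon.
Set Implicit Arguments. Unset Strict Implicit. Unset Printing Implicit Defensive.
Import GRing.Theory.
Local Open Scope ring_scope.

Definition pb (P : Prop) : bool := if excluded_middle_informative P then true else false.
Lemma pbP (P : Prop) : pb P <-> P.
Proof. rewrite /pb; case: excluded_middle_informative => //. Qed.

Section Sub.
Variables (K : fieldType) (A : algType K) (P : A -> Prop).
Hypotheses (P1 : P 1) (P0 : P 0) (PD : forall a b, P a -> P b -> P (a + b))
  (PZ : forall (k : K) a, P a -> P (k *: a)) (PM : forall a b, P a -> P b -> P (a * b)).
Definition Sp : {pred A} := fun u => pb (P u).
Lemma Sp_closed : GRing.subsemialg_closed Sp.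
Proof.
split; rewrite /in_mem /= /Sp.
- by apply/pbP.
- split; first by apply/pbP. by move=> a b /pbP ? /pbP ?; apply/pbP; auto.
- by move=> k a; rewrite /in_mem /= => /pbP ?; apply/pbP; auto.
- by move=> a b; rewrite /in_mem /= => /pbP ? /pbP ?; apply/pbP; auto.
Qed.
End Sub.


Definition ST (K : fieldType) (A : algType K) (P : A -> Prop)
  (h : GRing.subsemialg_closed (Sp P)) := {u : A | Sp P u}.
Section SubI.
Variables (K : fieldType) (A : algType K) (P : A -> Prop) (h : GRing.subsemialg_closed (Sp P)).
HB.instance Definition _ := [isSub of ST h for (@sval A (Sp P))].
HB.instance Definition _ := [Equality of ST h by <:].
HB.instance Definition _ := [Choice of ST h by <:].
HB.instance Definition _ := GRing.SubChoice_isSubAlgebra.Build K A (Sp P) (ST h) h.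
End SubI.

Section Gen.
Variables (K : fieldType) (n : nat) (A : algType K) (x y : nat -> A).
Hypothesis HA : is_Sn n x y.
Lemma gen_all (P : A -> Prop) (P1 : P 1) (P0 : P 0) (PD : forall a b, P a -> P b -> P (a + b))
  (PZ : forall (k : K) a, P a -> P (k *: a)) (PM : forall a b, P a -> P b -> P (a * b))
  (Px : forall i, (i < n)%N -> P (x i)) (Py : forall i, (i < n)%N -> P (y i)) :
  forall z, P z.
Proof.
have hcl := Sp_closed P1 P0 PD PZ PM.
pose T := ST hcl.
pose a i : T := insubd (1 : T) (x i).
pose b i : T := insubd (1 : T) (y i).
have va i : (i < n)%N -> sval (a i) = x i.
  by move=> hi; apply: (insubdK (1 : T)); apply/pbP; apply: Px.
have vb i : (i < n)%N -> sval (b i) = y i.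
  by move=> hi; apply: (insubdK (1 : T)); apply/pbP; apply: Py.
case: HA => [[R1 R2] U].
have rel : Sn_rels n a b.
  split.
  - by move=> i hi; apply: val_inj => /=; rewrite va // vb // R1.
  - move=> i j hi hj hij; have [h1 [h2 h3]] := R2 i j hi hj hij.
    by split; [|split]; apply: val_inj => /=; rewrite ?va ?vb.
have [[f [hf hfg]] U2] := U T a b rel.
have hv : alg_hom (fun z : A => val (f z)).
  case: hf => [fD [fM [f1 fZ]]].
  split; [|split; [|split]].
  - by move=> u v; rewrite fD raddfD.
  - by move=> u v; rewrite fM rmorphM.
  - by rewrite f1 rmorph1.
  - by move=> k u; rewrite fZ linearZ.
have hid : alg_hom (fun z : A => z) by [].
have [_ U3] := U A x y (conj R1 R2).
have E : forall z, \val (f z) = z.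
  apply: U3 => // i hi; have [-> ->] := hfg i hi; split.
  - exact: va.
  - exact: vb.
move=> z; rewrite -(E z); apply/pbP; exact: (valP (f z)).
Qed.
End Gen.



Section IdealGen.
Variable R : nzRingType.
Definition is_ideal (Q : R -> Prop) := Q 0 /\ (forall a b, Q a -> Q b -> Q (a + b)) /\
  (forall a b, Q b -> Q (a * b)) /\ (forall a b, Q a -> Q (a * b)).

Lemma ideal_gen_ideal (P : R -> Prop) : is_ideal (ideal_gen P).
Proof.
split; [|split; [|split]].
- by exists [::]; rewrite big_nil.
- move=> a b [l1 [h1 ->]] [l2 [h2 ->]]; exists (l1 ++ l2); rewrite big_cat; split => //.
  by move=> t; rewrite mem_cat => /orP [] ?; auto.
- move=> a b [l [h ->]]; exists (map (fun t => (a * t.1.1, t.1.2, t.2)) l); split.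
  + by move=> t /mapP [t' ht' ->] /=; apply: h.
  + by rewrite big_map mulr_sumr; apply: eq_bigr => t _ /=; rewrite !mulrA.
- move=> a b [l [h ->]]; exists (map (fun t => (t.1.1, t.1.2, t.2 * b)) l); split.
  + by move=> t /mapP [t' ht' ->] /=; apply: h.
  + by rewrite big_map mulr_suml; apply: eq_bigr => t _ /=; rewrite !mulrA.
Qed.

Lemma ideal_gen_in (P : R -> Prop) z : P z -> ideal_gen P z.
Proof.
move=> hz; exists [:: (1, z, 1)]; split.
- by move=> t; rewrite inE => /eqP -> /=.
- by rewrite big_seq1 /= mul1r mulr1.
Qed.

Lemma ideal_gen_min (P Q : R -> Prop) : Q 0 -> (forall a b, Q a -> Q b -> Q (a + b)) ->
  (forall a g b, P g -> Q (a * g * b)) -> forall z, ideal_gen P z -> Q z.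
Proof.
move=> Q0 QD Qg z [l [h ->]]; elim: l h => [|t l IH] h; first by rewrite big_nil.
rewrite big_cons; apply: QD; first by apply: Qg; apply: h; rewrite inE eqxx.
by apply: IH => t' ht'; apply: h; rewrite inE ht' orbT.
Qed.

Lemma ideal_min (P Q : R -> Prop) : is_ideal Q -> (forall z, P z -> Q z) ->
  forall z, ideal_gen P z -> Q z.
Proof.
move=> [Q0 [QD [QL QR]]] hPQ; apply: ideal_gen_min => // a g b hg.
by apply: QR; apply: QL; apply: hPQ.
Qed.

Lemma ideal_gen_mono (P Q : R -> Prop) : (forall z, P z -> Q z) ->
  forall z, ideal_gen P z -> ideal_gen Q z.
Proof. move=> h; apply: ideal_min => //; [exact: ideal_gen_ideal | by move=> z /h; apply: ideal_gen_in]. Qed.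

Lemma ideal_mul_ideal (P Q : R -> Prop) : is_ideal (ideal_mul P Q).
Proof. exact: ideal_gen_ideal. Qed.

Lemma ideal_mul_l (P Q : R -> Prop) : is_ideal P -> forall z, ideal_mul P Q z -> P z.
Proof.
move=> hP; apply: ideal_min => // z [a [b [ha [hb ->]]]].
by case: hP => [_ [_ [_ hR]]]; apply: hR.
Qed.

Lemma ideal_mul_r (P Q : R -> Prop) : is_ideal Q -> forall z, ideal_mul P Q z -> Q z.
Proof.
move=> hQ; apply: ideal_min => // z [a [b [ha [hb ->]]]].
by case: hQ => [_ [_ [hL _]]]; apply: hL.
Qed.

Lemma units_iff (P Q T : R -> Prop) : (forall z, P z /\ Q z <-> T z) ->
  forall u, ideal_cap (units1 P) (units1 Q) u <-> units1 T u.
Proof.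
move=> h u; rewrite /ideal_cap /units1; split.
- by move=> [[hu hp] [_ hq]]; split => //; apply/h.
- by move=> [hu /h [hp hq]].
Qed.
End IdealGen.



Section Main.
Variables (K : fieldType) (n : nat) (A : algType K) (x y : nat -> A).
Hypothesis HA : is_Sn n x y.

Lemma R1 i : (i < n)%N -> y i * x i = 1.
Proof. by case: HA => [[h _] _]; apply: h. Qed.
Lemma R2 i j : (i < n)%N -> (j < n)%N -> i != j ->
  x i * y j = y j * x i /\ x i * x j = x j * x i /\ y i * y j = y j * y i.
Proof. by case: HA => [[_ h] _]; apply: h. Qed.

Lemma L_gen k : (k < n)%N -> forall u, exists N, forall M, exists w,
  y k ^+ (M + N) * u = w * y k ^+ M.
Proof.
move=> hk; apply: (gen_all HA).
- by exists 0%N => M; exists 1; rewrite addn0 mulr1 mul1r.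
- by exists 0%N => M; exists 0; rewrite mulr0 mul0r.
- move=> a b [N1 h1] [N2 h2]; exists (N1 + N2)%N => M.
  have [w1 e1] := h1 (M + N2)%N; have [w2 e2] := h2 (M + N1)%N.
  exists (w1 * y k ^+ N2 + w2 * y k ^+ N1); rewrite mulrDr mulrDl.
  have ea : (M + (N1 + N2) = M + N2 + N1)%N by rewrite (addnC N1) addnA.
  have eb : (M + (N1 + N2) = M + N1 + N2)%N by rewrite addnA.
  rewrite {1}ea e1 eb e2 -!mulrA -!exprD (addnC N2) (addnC N1) //.
- move=> c a [N h]; exists N => M; have [w e] := h M; exists (c *: w).
  by rewrite -scalerAr e scalerAl.
- move=> a b [N1 h1] [N2 h2]; exists (N1 + N2)%N => M.
  have [w1 e1] := h1 (M + N2)%N; have [w2 e2] := h2 M.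
  have ea : (M + (N1 + N2) = M + N2 + N1)%N by rewrite (addnC N1) addnA.
  exists (w1 * w2); rewrite mulrA ea e1.
  by rewrite -mulrA e2 mulrA.
- move=> i hi; case: (eqVneq i k) => [->|nik].
  + by exists 1%N => M; exists 1; rewrite addn1 exprSr -mulrA R1 // mulr1 mul1r.
  + exists 0%N => M; exists (x i); rewrite addn0; apply/esym/commrX.
    by have [h _] := R2 hi hk nik.
- move=> i hi; exists 0%N => M; exists (y i); rewrite addn0; apply/esym/commrX.
  case: (eqVneq i k) => [->|nik]; first by [].
  by have [_ [_ h]] := R2 hi hk nik.
Qed.

Lemma ye k : (k < n)%N -> y k * e_ x y k = 0.
Proof. by move=> hk; rewrite /e_ mulrBr mulr1 mulrA R1 // mul1r subrr. Qed.

Lemma L_ann k : (k < n)%N -> forall z, p_ x y k z ->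
  exists N0, forall N, (N0 <= N)%N -> y k ^+ N * z = 0.
Proof.
move=> hk; apply: ideal_gen_min.
- by exists 0%N => N _; rewrite mulr0.
- move=> a b [N1 h1] [N2 h2]; exists (maxn N1 N2) => N hN.
  rewrite mulrDr h1 ?h2 ?addr0 //; apply: leq_trans hN.
  + exact: leq_maxr.
  + exact: leq_maxl.
- move=> a g b ->; have [N h] := L_gen hk a; have [w e] := h 1%N.
  exists (1 + N)%N => M hM; rewrite -(subnK hM) exprD -mulrA !mulrA -(mulrA _ _ a) e.
  by rewrite -!mulrA expr1 (mulrA (y k)) ye // !(mulr0, mul0r).
Qed.

Lemma f_in k N : p_ x y k (1 - x k ^+ N * y k ^+ N).
Proof.
elim: N => [|N IH]; first by rewrite !expr0 mulr1 subrr; case: (ideal_gen_ideal (fun z => z = e_ x y k)).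
have -> : 1 - x k ^+ N.+1 * y k ^+ N.+1 = (1 - x k ^+ N * y k ^+ N) + x k ^+ N * e_ x y k * y k ^+ N.
  rewrite /e_ mulrBr mulr1 mulrBl (mulrA _ (x k)) -exprSr -(mulrA _ (y k)) -exprS.
  by rewrite addrA subrK.
case: (ideal_gen_ideal (fun z => z = e_ x y k)) => [_ [hD [hL hR]]].
by apply: hD => //; apply: hR; apply: hL; apply: ideal_gen_in.
Qed.

Lemma p_ideal k : is_ideal (p_ x y k).
Proof. exact: ideal_gen_ideal. Qed.

Definition q k N := x k ^+ N * y k ^+ N.

Lemma LU k : (k < n)%N -> forall z, p_ x y k z ->
  exists N0, forall N, (N0 <= N)%N -> q k N * z = 0.
Proof.
move=> hk z hz; have [N0 h] := L_ann hk hz; exists N0 => N hN.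
by rewrite /q -mulrA h // mulr0.
Qed.

Lemma mul_in k (Q : A -> Prop) : (k < n)%N -> forall z, p_ x y k z -> Q z ->
  ideal_mul (p_ x y k) Q z.
Proof.
move=> hk z hz hQ; have [N0 h] := LU hk hz.
have e : z = (1 - q k N0) * z by rewrite mulrBl mul1r h // subr0.
apply: ideal_gen_in; exists (1 - q k N0), z; split; [exact: f_in | split => //].
Qed.

Lemma q_comm j k N M : (j < n)%N -> (k < n)%N -> j != k -> GRing.comm (q j N) (q k M).
Proof.
move=> hj hk njk; have [c1 [c2 c3]] := R2 hj hk njk.
have nkj : k != j by rewrite eq_sym.
have [d1 _] := R2 hk hj nkj.
apply: commr_sym; apply: commrM; apply: commrX; apply: commr_sym;
  apply: commrM; apply: commrX; rewrite /GRing.comm //.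
Qed.

Definition pIf (ks : seq nat) : A -> Prop :=
  foldr (fun i acc => ideal_mul (p_ x y i) acc) (ideal_gen (fun z => z = 1)) ks.

Lemma pIf_ideal ks : is_ideal (pIf ks).
Proof. by case: ks => [|k ks]; apply: ideal_gen_ideal. Qed.

Lemma pIf_iff ks : all (fun k => k < n)%N ks -> forall z,
  pIf ks z <-> (forall k, k \in ks -> p_ x y k z).
Proof.
elim: ks => [|k ks IH] /= hall z.
- split => // _; case: (ideal_gen_ideal (fun z : A => z = 1)) => [_ [_ [_ hR]]].
  by rewrite -(mul1r z); apply: hR; apply: ideal_gen_in.
- case/andP: hall => hk hall; split.
  + move=> h k'; rewrite inE => /orP [/eqP ->|hk'].
    * exact: (ideal_mul_l (p_ideal k) h).
    * by move: k' hk'; apply/(IH hall z); apply: (ideal_mul_r (pIf_ideal ks) h).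
  + move=> h; apply: mul_in => //; first by apply: h; rewrite inE eqxx.
    by apply/(IH hall z) => k' hk'; apply: h; rewrite inE hk' orbT.
Qed.

Lemma pI_iff (I : {set 'I_n}) z : pI x y I z <-> (forall i : 'I_n, i \in I -> p_ x y i z).
Proof.
have hall : all (fun k => k < n)%N (map val (enum I)).
  by apply/allP => k /mapP [i _ ->]; exact: ltn_ord.
rewrite /pI -/(pIf _) (pIf_iff hall); split.
- by move=> h i hi; apply: h; apply: map_f; rewrite mem_enum.
- by move=> h k /mapP [i hi ->]; apply: h; rewrite -mem_enum.
Qed.

Lemma pI_ideal (I : {set 'I_n}) : is_ideal (pI x y I).
Proof. exact: pIf_ideal. Qed.
End Main.



Lemma exists_sub (T : finType) (B : {set T}) m : (m <= #|B|)%N ->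
  exists C : {set T}, C \subset B /\ #|C| = m.
Proof.
elim: m => [|m IH] hm; first by exists set0; rewrite sub0set cards0.
have [C [hCB hC]] := IH (ltnW hm).
have : C \proper B by rewrite properEcard hCB hC hm.
case/properP => _ [a haB haC]; exists (a |: C); split.
- by rewrite subUset sub1set haB hCB.
- by rewrite cardsU1 haC hC.
Qed.

Lemma pick_I (n s : nat) (I : {set 'I_n}) (P2 : {set 'I_n}) :
  (#|I| = s)%N -> (#|P2| = 2)%N -> (2 <= s)%N ->
  exists I' : {set 'I_n}, (#|I'| = s)%N /\ P2 \subset I' /\ I' \subset I :|: P2.
Proof.
move=> hI hP hs.
have hB : (s - 2 <= #|I :\: P2|)%N.
  rewrite cardsD hI leq_sub2l // -hP; apply: subset_leq_card; exact: subsetIr.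
have [C [hCB hC]] := exists_sub hB.
exists (C :|: P2); split; [|split].
- have hdis : C :&: P2 = set0.
    apply/setP => i; rewrite !inE; apply/negbTE/negP => /andP [hiC hiP].
    by have := subsetP hCB i hiC; rewrite !inE hiP.
  by rewrite cardsU hdis cards0 subn0 hC hP subnK.
- exact: subsetUr.
- apply/subsetP => i; rewrite !inE => /orP [hi|->]; last by rewrite orbT.
  by have := subsetP hCB i hi; rewrite !inE => /andP [_ ->].
Qed.



Section Main2.
Variables (K : fieldType) (n : nat) (A : algType K) (x y : nat -> A).
Hypothesis HA : is_Sn n x y.
Hypothesis hn : (3 <= n)%N.
Variables (S : {set 'I_n}).
Hypothesis hS0 : S != set0.
Hypothesis hS : forall i, i \in S -> (val i < n.-1)%N.

Lemma ln_lt : (n.-1 < n)%N.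
Proof. by rewrite ltn_predL; apply: leq_trans hn. Qed.
Definition ln : 'I_n := Ordinal ln_lt.

Lemma ppn_in (j : 'I_n) z : j \in S -> p_ x y j z -> p_ x y n.-1 z -> ppn x y S z.
Proof.
move=> hj h1 h2; apply: ideal_gen_in; exists j; split => //.
exact: (mul_in HA (ltn_ord j) h1 h2).
Qed.

Lemma ppn_min (Q : A -> Prop) : is_ideal Q ->
  (forall j : 'I_n, j \in S -> forall w, p_ x y j w -> p_ x y n.-1 w -> Q w) ->
  forall z, ppn x y S z -> Q z.
Proof.
move=> hQ h; apply: ideal_min => // z [j [hj hz]]; apply: (h j hj).
- exact: (ideal_mul_l (p_ideal _ _ _) hz).
- exact: (ideal_mul_r (p_ideal _ _ _) hz).
Qed.

Lemma ppn_ideal : is_ideal (ppn x y S).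
Proof. exact: ideal_gen_ideal. Qed.

Lemma ideal_both (P Q : A -> Prop) : is_ideal P -> is_ideal Q -> is_ideal (fun z => P z /\ Q z).
Proof.
move=> [P0 [PD [PL PR]]] [Q0 [QD [QL QR]]]; split; [|split; [|split]] => //.
- by move=> a b [? ?] [? ?]; split; auto.
- by move=> a b [? ?]; split; auto.
- by move=> a b [? ?]; split; auto.
Qed.

Lemma gen_both (j : 'I_n) : j \in S -> forall a g b,
  ideal_mul (p_ x y j) (p_ x y n.-1) g -> p_ x y j (a * g * b) /\ p_ x y n.-1 (a * g * b).
Proof.
move=> hj a g b hg.
have [_ [_ [hL hR]]] := ideal_both (p_ideal x y j) (p_ideal x y n.-1).
apply: hR; apply: hL; split.
- exact: (ideal_mul_l (p_ideal _ _ _) hg).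
- exact: (ideal_mul_r (p_ideal _ _ _) hg).
Qed.

Lemma ln_neq (j : 'I_n) : j \in S -> j != ln.
Proof. by move=> hj; apply/eqP => e; have := hS hj; rewrite e /= ltnn. Qed.

Lemma ppn_a1 z : ppn x y S z -> a_ns n x y 1 z.
Proof.
apply: ppn_min; first exact: ideal_gen_ideal.
move=> j hj w h1 h2; apply: ideal_gen_in; exists [set j]; split; first by rewrite cards1.
by apply/(pI_iff HA) => i; rewrite inE => /eqP ->.
Qed.

Lemma ppn_a2 z : ppn x y S z -> a_ns n x y 2 z.
Proof.
apply: ppn_min; first exact: ideal_gen_ideal.
move=> j hj w h1 h2; apply: ideal_gen_in; exists [set j; ln]; split.
  by rewrite cards2 ln_neq.
by apply/(pI_iff HA) => i; rewrite !inE => /orP [] /eqP ->.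
Qed.

Lemma F_ppn z : F_n n x y z -> ppn x y S z.
Proof.
move=> h; case/set0Pn: hS0 => j hj; move/(pI_iff HA): h => h.
by apply: (ppn_in hj); [apply: h; rewrite inE | apply: (h ln); rewrite inE].
Qed.

Lemma an_F z : a_ns n x y n z <-> F_n n x y z.
Proof.
split.
- apply: ideal_min; first exact: pI_ideal.
  move=> w [I [hI hw]]; have e : [set: 'I_n] = I.
    by apply/esym; apply/eqP; rewrite eqEcard subsetT cardsT card_ord hI leqnn.
  by rewrite /F_n e.
- by move=> h; apply: ideal_gen_in; exists [set: 'I_n]; rewrite cardsT card_ord.
Qed.

Lemma prod_kill (js : seq 'I_n) (j0 : 'I_n) w N : j0 \in js -> q x y j0 N * w = 0 ->
  (\prod_(j <- js) q x y j N) * w = 0.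
Proof.
elim: js => [|a js IH] //; rewrite inE big_cons => hj0 hq.
case: (boolP (j0 \in js)) => hin; first by rewrite -mulrA IH // mulr0.
move: hj0; rewrite (negbTE hin) orbF => /eqP <-.
rewrite big_seq.
have c : GRing.comm (q x y j0 N) (\prod_(j <- js | j \in js) q x y j N).
  apply: commr_prod => j hj; apply: (q_comm HA); try exact: ltn_ord.
  by apply/negP => /eqP e; move: hin; rewrite (val_inj e) hj.
by rewrite c -mulrA hq mulr0.
Qed.

Definition Pq N := \prod_(j <- enum S) q x y j N.

Lemma ppn_kill z : ppn x y S z -> exists N0, forall N, (N0 <= N)%N ->
  q x y n.-1 N * z = 0 /\ Pq N * z = 0.
Proof.
move=> hz; move: z hz.
apply: (ideal_gen_min (Q := fun z => exists N0, forall N, (N0 <= N)%N ->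
  q x y n.-1 N * z = 0 /\ Pq N * z = 0)).
- by exists 0%N => N _; rewrite !mulr0.
- move=> a b [N1 h1] [N2 h2]; exists (maxn N1 N2) => N hN.
  have [e1 e2] := h1 N (leq_trans (leq_maxl _ _) hN).
  have [e3 e4] := h2 N (leq_trans (leq_maxr _ _) hN).
  by rewrite !mulrDr e1 e2 e3 e4 addr0.
- move=> a g b [j [hj hg]]; have [h1 h2] := gen_both hj a b hg.
  have [N1 k1] := LU HA (ltn_ord j) h1; have [N2 k2] := LU HA ln_lt h2.
  exists (maxn N1 N2) => N hN; split.
  + exact: k2 (leq_trans (leq_maxr _ _) hN).
  + apply: (prod_kill (j0 := j)); first by rewrite mem_enum.
    exact: k1 (leq_trans (leq_maxl _ _) hN).
Qed.

Lemma h_in N (js : seq 'I_n) : (forall j, j \in js -> j \in S) ->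
  ppn x y S ((1 - \prod_(j <- js) q x y j N) * (1 - q x y n.-1 N)).
Proof.
have [P0 [PD [PL PR]]] := ppn_ideal.
elim: js => [|a js IH] hjs; first by rewrite big_nil subrr mul0r.
rewrite big_cons.
have -> : (1 - q x y a N * \prod_(j <- js) q x y j N) * (1 - q x y n.-1 N) =
  (1 - q x y a N) * (1 - q x y n.-1 N) + q x y a N * ((1 - \prod_(j <- js) q x y j N) * (1 - q x y n.-1 N)).
  have e : 1 - q x y a N * \prod_(j <- js) q x y j N =
    (1 - q x y a N) + q x y a N * (1 - \prod_(j <- js) q x y j N).
    by rewrite mulrBr mulr1 addrA subrK.
  by rewrite e mulrDl mulrA.
apply: PD; last by apply: PL; apply: IH => j hj; apply: hjs; rewrite inE hj orbT.
apply: (ppn_in (j := a)); first by apply: hjs; rewrite inE eqxx.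
- by have [_ [_ [_ hR]]] := p_ideal x y a; apply: hR; apply: f_in.
- by have [_ [_ [hL _]]] := p_ideal x y n.-1; apply: hL; apply: f_in.
Qed.

Lemma unit_ppn z : ppn x y S z -> exists h, ppn x y S h /\ h * z = z.
Proof.
move=> hz; have [N0 h] := ppn_kill hz; have [e1 e2] := h N0 (leqnn _).
exists ((1 - Pq N0) * (1 - q x y n.-1 N0)); split.
- by apply: h_in => j; rewrite mem_enum.
- have e3 : (1 - q x y n.-1 N0) * z = z by rewrite mulrBl mul1r e1 subr0.
  by rewrite -mulrA e3 mulrBl mul1r e2 subr0.
Qed.

Lemma aJ_ideal s : is_ideal (a_ns_J x y S s).
Proof. exact: ideal_gen_ideal. Qed.

Lemma key s : (2 <= s)%N -> forall w, a_ns n x y s w -> forall j : 'I_n, j \in S ->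
  forall g, p_ x y j g -> p_ x y n.-1 g -> a_ns_J x y S s (g * w).
Proof.
move=> hs w hw; move: w hw.
have [J0 [JD [JL JR]]] := aJ_ideal s.
apply: (ideal_gen_min (Q := fun w => forall j : 'I_n, j \in S ->
  forall g, p_ x y j g -> p_ x y n.-1 g -> a_ns_J x y S s (g * w))).
- by move=> j hj g _ _; rewrite mulr0.
- by move=> a b ha hb j hj g h1 h2; rewrite mulrDr; apply: JD; [exact: ha j hj g h1 h2 | exact: hb j hj g h1 h2].
- move=> a v b [I [hI hv]] j hj g h1 h2; rewrite !mulrA; apply: JR.
  have [_ [_ [_ pR1]]] := p_ideal x y j; have [_ [_ [_ pR2]]] := p_ideal x y n.-1.
  have g1 := pR1 _ a h1; have g2 := pR2 _ a h2.
  have hP2 : #|[set j; ln]| = 2%N by rewrite cards2 ln_neq.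
  have [I' [hI' [hsub hsub2]]] := pick_I hI hP2 hs.
  apply: ideal_gen_in; exists I'; split => //; split.
  + split.
    * by exists ln; split => //; apply: (subsetP hsub); rewrite !inE eqxx orbT.
    * by exists j; split => //; apply: (subsetP hsub); rewrite !inE eqxx.
  + apply/(pI_iff HA) => i hi; have := subsetP hsub2 i hi; rewrite !inE => /orP [hiI|/orP [/eqP ->|/eqP ->]].
    * have [_ [_ [hL _]]] := p_ideal x y i; apply: hL.
      by move/(pI_iff HA): hv; apply.
    * have [_ [_ [_ hR]]] := p_ideal x y j; exact: hR.
    * have [_ [_ [_ hR]]] := p_ideal x y n.-1; exact: hR.
Qed.

Lemma hard s z : (2 <= s)%N -> ppn x y S z -> a_ns n x y s z -> a_ns_J x y S s z.
Proof.
move=> hs hz ha; have [h [hh e]] := unit_ppn hz; rewrite -e.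
move: h hh z ha {hz e}.
apply: (ideal_gen_min (Q := fun h => forall w, a_ns n x y s w -> a_ns_J x y S s (h * w))).
- by move=> w _; rewrite mul0r; case: (aJ_ideal s).
- move=> a b ha hb w hw; rewrite mulrDl; case: (aJ_ideal s) => [_ [JD _]]; apply: JD; auto.
- move=> a g b [j [hj hg]] w hw; have [h1 h2] := gen_both hj a b hg.
  exact: (key hs hw hj h1 h2).
Qed.

Lemma easy s z : a_ns_J x y S s z -> ppn x y S z /\ a_ns n x y s z.
Proof.
move=> h; split.
- move: z h; apply: ideal_min; first exact: ppn_ideal.
  move=> v [I [hI [[[j' [hj' e']] [j [hj hjS]]] hv]]].
  move/(pI_iff HA): hv => hv.
  by apply: (ppn_in hjS); [apply: hv | rewrite -e'; apply: hv].
- move: z h; apply: ideal_gen_mono => v [I [hI [_ hv]]]; by exists I.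
Qed.

Lemma main_sec :
  (forall s : nat, (2 <= s)%N -> (s <= n.-1)%N ->
     forall u, ideal_cap (units1 (ppn x y S)) (units1 (a_ns n x y s)) u
               <-> units1 (a_ns_J x y S s) u) /\
  (forall u, ideal_cap (units1 (ppn x y S)) (units1 (a_ns n x y n)) u
             <-> units1 (F_n n x y) u) /\
  (forall u, ideal_cap (units1 (ppn x y S)) (units1 (a_ns n x y 1)) u
             <-> units1 (ppn x y S) u) /\
  (forall u, ideal_cap (units1 (ppn x y S)) (units1 (a_ns n x y 2)) u
             <-> units1 (ppn x y S) u).
Proof.
split; [|split; [|split]].
- move=> s hs _; apply: units_iff => z; split.
  + by case=> h1 h2; apply: hard.
  + exact: easy.
- apply: units_iff => z; split.
  + by case=> _ /an_F.
  + by move=> h; split; [apply: F_ppn | apply/an_F].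
- apply: units_iff => z; split; [by case | by move=> h; split => //; apply: ppn_a1].
- apply: units_iff => z; split; [by case | by move=> h; split => //; apply: ppn_a2].
Qed.
End Main2.

Unset Implicit Arguments.
Theorem lemma5p1 (K : fieldType) (n : nat) (A : algType K) (x y : nat -> A)
  (HA : is_Sn n x y) (hn : (3 <= n)%N)
  (S : {set 'I_n}) (hS0 : S != set0) (hS : forall i, i \in S -> (val i < n.-1)%N) :
  (forall s : nat, (2 <= s)%N -> (s <= n.-1)%N ->
     forall u, ideal_cap (units1 (ppn x y S)) (units1 (a_ns n x y s)) u
               <-> units1 (a_ns_J x y S s) u) /\
  (forall u, ideal_cap (units1 (ppn x y S)) (units1 (a_ns n x y n)) u
             <-> units1 (F_n n x y) u) /\
  (forall u, ideal_cap (units1 (ppn x y S)) (units1 (a_ns n x y 1)) u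
             <-> units1 (ppn x y S) u) /\
  (forall u, ideal_cap (units1 (ppn x y S)) (units1 (a_ns n x y 2)) u
             <-> units1 (ppn x y S) u).
Proof. exact: (main_sec HA hn hS0 hS). Qed.
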